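(* Fix a positive integer $l$. Let $\sigma$ be a random permutation uniformly distributed on the symmetric group $S_N$, and let $\tau$ be a random permutation uniformly distributed on the alternating group $A_N$. Then, as $N\to\infty$, $$\mathrm{Ex}\big[C_\tau^{\underline{l}}\big] = \mathrm{Ex}\big[C_\sigma^{\underline{l}}\big] + O\left(\frac{(\log N)^{l-1}}{N}\right).$$
   Context: For a permutation $\pi$ of $\{1,\ldots,N\}$, $C_\pi$ denotes the number of cycles of $\pi$; $\mathrm{Ex}$ denotes expectation. For a real number $x$, $x^{\underline{l}}=x(x-1)\cdots(x-l+1)$ denotes the $l$-th falling power. *)

(* Defs.v *)
From HB Require Import structures.
From mathcomp Require Import all_boot all_order all_algebra all_fingroup all_solvable.
From mathcomp Require Import all_classical all_reals all_analysis.
Set Implicit Arguments. Unset Strict Implicit. Unset Printing Implicit Defensive.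
Import Order.TTheory GRing.Theory Num.Theory.
Local Open Scope ring_scope.

(* number of cycles C_pi of a permutation of {0,...,N-1} (fixed points count) *)
Definition ncycles (N : nat) (s : {perm 'I_N}) : nat := #|porbits s|.

Definition ExSym (R : realType) (N l : nat) : R :=
  (\sum_(s : {perm 'I_N}) ((ncycles s) ^_ l)%:R) / (#|[set: {perm 'I_N}]|)%:R.

Definition ExAlt (R : realType) (N l : nat) : R :=
  (\sum_(s in ('Alt_('I_N))%g) ((ncycles s) ^_ l)%:R) / (#|('Alt_('I_N))%g|)%:R.

(* Main.v *)
Require Import Defs.
From HB Require Import structures.
From mathcomp Require Import all_boot all_order all_algebra all_fingroup all_solvable.
From mathcomp Require Import all_classical all_reals all_analysis.
From mathcomp Require Import zify ring lra.
Set Implicit Arguments. Unset Strict Implicit. Unset Printing Implicit Defensive.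
Import Order.TTheory GRing.Theory Num.Theory.

Section GroupPart.
Local Open Scope group_scope.

Section Comb.
Variable N : nat.
Local Notation n := (@ord_max N).
Local Notation ext u := (lift_perm n n u).

Lemma ext_pow (u : 'S_N) i : ((ext u) ^+ i)%g = ext (u ^+ i)%g.
Proof.
elim: i => [|i IH]; first by rewrite !expg0 lift_perm1.
by rewrite !expgS IH lift_permM.
Qed.

Lemma porbit_ext_lift (u : 'S_N) x :
  porbit (ext u) (lift n x) = [set lift n y | y in porbit u x].
Proof.
apply/setP => y; apply/porbitP/imsetP.
  by case=> i ->; exists ((u ^+ i) x); rewrite ?mem_porbit // ext_pow lift_perm_lift.
by case=> z /porbitP [i ->] ->; exists i; rewrite ext_pow lift_perm_lift.
Qed.

Lemma porbit_ext_max (u : 'S_N) : porbit (ext u) n = [set n].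
Proof.
apply/setP => y; rewrite inE; apply/porbitP/eqP.
  by case=> i ->; rewrite ext_pow lift_perm_id.
by move=> ->; exists 0; rewrite expg0 perm1.
Qed.

Lemma ncycles_ext (u : 'S_N) : ncycles (ext u) = (ncycles u).+1.
Proof.
rewrite /ncycles.
have -> : porbits (ext u) = [set n] |: [set [set lift n y | y in A] | A : {set 'I_N} in porbits u].
  apply/setP => z; rewrite !inE; apply/imsetP/idP.
    case=> y _ ->; case: (unliftP n y) => [x|] ->.
      apply/orP; right; apply/imsetP; exists (porbit u x); first exact: imset_f.
      exact: porbit_ext_lift.
    by rewrite porbit_ext_max eqxx.
  case/orP => [/eqP ->| /imsetP [A /imsetP [x _ ->] ->]].
    by exists n => //; rewrite porbit_ext_max.
  by exists (lift n x) => //; rewrite porbit_ext_lift.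
rewrite cardsU1 card_imset; last exact: imset_inj (@lift_inj _ n).
suff -> : [set n] \notin [set [set lift n y | y in A] | A : {set 'I_N} in porbits u] by [].
apply/imsetP => -[A /imsetP [x _ ->] /setP /(_ (lift n x))].
rewrite inE imset_f ?porbit_id // => /eqP h.
by move: (neq_lift n x); rewrite h eqxx.
Qed.

Definition hmap (p : 'I_N.+1 * 'S_N) : 'S_N.+1 := tperm n p.1 * ext p.2.

Lemma hmap_j p : hmap p p.1 = n.
Proof. by rewrite /hmap permM tpermR lift_perm_id. Qed.

Lemma hmap_inj : injective hmap.
Proof.
move=> [j u] [j' u'] E.
have ej : j = j'.
  apply: (@perm_inj _ (hmap (j, u))); rewrite (hmap_j (j, u)) E (hmap_j (j', u')) //.
subst j'; move: E; rewrite /hmap /= => /mulgI E.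
congr (_, _); apply/permP => k; apply: (@lift_inj _ n).
by rewrite -(lift_perm_lift n n u) -(lift_perm_lift n n u') E.
Qed.

Lemma big_hmap (R : Type) (idx : R) (op : Monoid.com_law idx) (F : 'S_N.+1 -> R) :
  \big[op/idx]_(s : 'S_N.+1) F s =
  \big[op/idx]_(j : 'I_N.+1) \big[op/idx]_(u : 'S_N) F (hmap (j, u)).
Proof.
rewrite pair_big /=.
have bij : bijective hmap.
  apply: (inj_card_bij hmap_inj).
  by rewrite card_prod card_ord !card_Sn factS.
by rewrite (reindex hmap) //; apply: onW_bij.
Qed.

Lemma odd_hmap j u : odd_perm (hmap (j, u)) = (n != j) (+) odd_perm u.
Proof. by rewrite /hmap odd_mul_tperm /= odd_lift_perm addbb. Qed.

Lemma ncycles_hmap j u :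
  ncycles (hmap (j, u)) = if j == n then (ncycles u).+1 else ncycles u.
Proof.
have := porbits_mul_tperm (ext u) n j.
rewrite /= -/(hmap (j,u)) -/(ncycles _) -/(ncycles _) ncycles_ext.
have -> : (n \in porbit (ext u) j) = (j == n).
  by rewrite porbit_sym porbit_ext_max inE.
rewrite eq_sym; case: eqP => _ /=; lia.
Qed.
End Comb.

End GroupPart.

Local Open Scope ring_scope.

Definition D (R : realType) N (g : nat -> R) : R :=
  \sum_(s : 'S_N) (-1) ^+ (odd_perm s) * g (ncycles s).

Lemma D_rec (R : realType) N (g : nat -> R) :
  D N.+1 g = D N (fun k => g k.+1) - N%:R * D N g.
Proof.
rewrite /D big_hmap big_ord_recr /= addrC; congr (_ + _).
  by apply: eq_bigr => u _; rewrite odd_hmap ncycles_hmap eqxx.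
transitivity (\sum_(i < N) - \sum_(s : 'S_N) (-1) ^+ (odd_perm s) * g (ncycles s)).
  apply: eq_bigr => i _.
  have hi : (widen_ord (leqnSn N) i == ord_max) = false.
    by apply/negbTE; rewrite -val_eqE /= neq_ltn ltn_ord.
  rewrite -sumrN; apply: eq_bigr => u _.
  rewrite odd_hmap ncycles_hmap hi eq_sym hi.
  by case: (odd_perm u); rewrite /= ?expr0 ?expr1 ?mulN1r ?mul1r ?opprK.
by rewrite sumr_const card_ord mulNrn mulr_natl.
Qed.

Local Open Scope ring_scope.

Lemma D_lin (R : realType) N (a b : nat -> R) (c : R) :
  D N (fun k => a k + c * b k) = D N a + c * D N b.
Proof.
rewrite /D mulr_sumr -big_split /=; apply: eq_bigr => s _; by rewrite mulrDr mulrCA.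
Qed.

Lemma ffact_rec k l : (k.+1 ^_ l.+1 = k ^_ l.+1 + l.+1 * k ^_ l)%N.
Proof.
rewrite ffactSS ffactnSr.
case: (ltnP k l) => h.
  by rewrite (ffact_small h) !muln0 mul0n.
have -> : k.+1 = (k - l + l.+1)%N by lia.
by rewrite mulnDl mulnC.
Qed.


Definition fl (R : realType) l k : R := (k ^_ l)%:R.


Lemma D_f0 (R : realType) M : D M.+2 (@fl R 0) = 0.
Proof.
have c : (fun k => @fl R 0 k.+1) = @fl R 0 by apply: funext => k; rewrite /fl !ffactn0.
elim: M => [|M IH].
  by rewrite D_rec c mul1r subrr.
by rewrite D_rec c IH mulr0 subrr.
Qed.

Lemma D_fS (R : realType) N l :
  D N.+1 (@fl R l.+1) = D N (@fl R l.+1) + l.+1%:R * D N (@fl R l) - N%:R * D N (@fl R l.+1).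
Proof.
rewrite D_rec -D_lin; congr (D _ _ - _).
by apply: funext => k; rewrite /fl ffact_rec natrD natrM.
Qed.

Local Open Scope ring_scope.

Lemma D_bound (R : realType) l :
  exists K : R, 0 <= K /\ forall M, `|D M.+2 (@fl R l)| <= K * (M.+1)`!%:R.
Proof.
elim: l => [|l [K1 [K1ge0 HK1]]].
  by exists 0; split => // M; rewrite D_f0 normr0 mul0r.
pose d2 : R := `|D 2 (@fl R l.+1)|.
have inner : forall M, `|D M.+2 (@fl R l.+1)| <= (d2 + l.+1%:R * K1 * M%:R) * M`!%:R.
  elim => [|M IH]; first by rewrite fact0 mulr1 mulr0 addr0.
  rewrite D_fS.
  move: IH (HK1 M).
  set X := D M.+2 (fl R l.+1); set Y := D M.+2 (fl R l).
  rewrite factS natrM -(addn1 M.+1) -(addn1 M) !natrD.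
  have : (0:R) <= M`!%:R /\ (0:R) <= M%:R /\ (0:R) <= l.+1%:R by [].
  move: (M`!%:R) (M%:R) (l.+1%:R) => F m c [F0 [m0 c0]] hX hY.
  have -> : X + c * Y - (m + 1 + 1) * X = c * Y - (m + 1) * X by ring.
  apply: (le_trans (ler_normB _ _)); rewrite !normrM (ger0_norm c0).
  rewrite (ger0_norm (_ : 0 <= m + 1)); last by lra.
  have h1 : c * `|Y| <= c * (K1 * ((m + 1) * F)) by apply: ler_wpM2l.
  have h2 : (m + 1) * `|X| <= (m + 1) * ((d2 + c * K1 * m) * F).
    by apply: ler_wpM2l => //; lra.
  have -> : (d2 + c * K1 * (m + 1)) * ((m + 1) * F) =
     c * (K1 * ((m + 1) * F)) + (m + 1) * ((d2 + c * K1 * m) * F) by ring.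
  by apply: lerD.
have d20 : 0 <= d2 by exact: normr_ge0.
exists (d2 + l.+1%:R * K1); split.
  by apply: addr_ge0 => //; apply: mulr_ge0.
move=> M; apply: (le_trans (inner M)).
rewrite factS natrM mulrA ler_wpM2r //.
have : (0:R) <= M%:R /\ (0:R) <= l.+1%:R by [].
have -> : (M.+1%:R : R) = M%:R + 1 by rewrite -addn1 natrD.
move: (M%:R) (l.+1%:R) => m c [m0 c0].
have hc : 0 <= c * K1 by apply: mulr_ge0.
nra.
Qed.

Local Open Scope ring_scope.

Lemma ln_ge1 (R : realType) (N : nat) : (4 <= N)%N -> 1 <= ln (N%:R : R).
Proof.
move=> hN.
have e2 : expR (1/2 : R) <= 2.
  have h1 := expR_ge1Dx (- (1/2) : R).
  rewrite expRN in h1.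
  have ep := expR_gt0 (1/2 : R).
  have hm : expR (1/2 : R) * (expR (1/2))^-1 = 1 by rewrite mulfV // gt_eqF.
  move: h1 ep hm; move: (expR (1/2 : R)) ((expR (1/2 : R))^-1) => e y h1 ep hm.
  nra.
have e4 : expR (1 : R) <= 4.
  have -> : (1 : R) = 1/2 + 1/2 by field.
  rewrite expRD; have ep := expR_gt0 (1/2 : R); nra.
have hN' : (4 : R) <= N%:R by rewrite ler_nat.
rewrite -[X in X <= _](expRK 1) ler_ln ?posrE ?expR_gt0 //.
  lra.
lra.
Qed.

Lemma diff_eq (R : realType) N l : (1 < N)%N ->
  ExAlt R N l - ExSym R N l = D N (@fl R l) / N`!%:R.
Proof.
move=> hN.
have hA : (2 * #|('Alt_('I_N))%g|)%N = N`!.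
  by rewrite card_Alt card_ord.
have hS : #|[set: {perm 'I_N}]| = N`! by rewrite cardsT card_Sn.
rewrite /ExAlt /ExSym hS.
set S := \sum_(s : {perm 'I_N}) ((ncycles s) ^_ l)%:R.
set SA := \sum_(s in _) _.
have hSA : 2 * SA = S + D N (@fl R l).
  rewrite /SA /S /D big_mkcond /= mulr_sumr -big_split /=.
  apply: eq_bigr => s _; rewrite Alt_even /fl.
  case: (odd_perm s); rewrite /= ?expr0 ?expr1 ?mulN1r ?mul1r ?mulr0 ?subrr //. by rewrite mulr_natl mulr2n.
have hA' : 2 * (#|('Alt_('I_N))%g|%:R : R) = N`!%:R by rewrite -hA natrM.
have hA0 : (#|('Alt_('I_N))%g|%:R : R) != 0.
  by rewrite pnatr_eq0 -lt0n; apply/card_gt0P; exists 1%g; exact: group1.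
rewrite -hA'.
move: hSA hA0; move: (#|('Alt_('I_N))%g|%:R : R) SA S (D N (fl R l)) => a sa s d h ha.
have -> : sa = (s + d) / 2 by rewrite -h mulrAC divff ?mul1r // pnatr_eq0.
by field.
Qed.

Local Open Scope ring_scope.
Theorem theorem3p2 (R : realType) (l : nat) (hl : (0 < l)%N) :
  exists (K : R) (N0 : nat), forall N : nat, (N0 <= N)%N ->
    `| ExAlt R N l - ExSym R N l | <= K * (ln (N%:R : R)) ^+ (l.-1) / N%:R.
Proof.
have [K [K0 HK]] := D_bound R l.
exists K, 4%N => N hN.
have hL : 1 <= ln (N%:R : R) ^+ l.-1 by apply: exprn_ege1; apply: ln_ge1.
case: N hN hL => [|[|M]] // hN hL.
rewrite diff_eq // normrM normfV normr_nat.
have hf : (M.+2)`!%:R = (M.+2%:R : R) * (M.+1)`!%:R by rewrite factS natrM.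
have hpos : (0 : R) < (M.+1)`!%:R by rewrite ltr0n fact_gt0.
have hN0 : (0 : R) < M.+2%:R by rewrite ltr0n.
rewrite hf invfM mulrA ler_pdivrMr //.
apply: (le_trans (ler_wpM2r _ (HK M))); first by rewrite invr_ge0 ltW.
set L := (X in K * X / _ * _); move: hL hpos hN0; rewrite -/L; move: L ((M.+1)`!%:R : R) (M.+2%:R : R) => L F n hL hF hn.
rewrite (_ : K * F / n = (K / n * F) * 1); last by ring.
rewrite (_ : K * L / n * F = (K / n * F) * L); last by ring.
apply: ler_wpM2l => //.
apply: mulr_ge0; [apply: divr_ge0 => //; exact: ltW | exact: ltW].
Qed.
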